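(* Let $\bm c_0\in\mathbb R^{|E|}$ be a metric cost vector on the complete graph $K_n=(V,E)$ with $TOUR(\bm c_0)=1$, and let $\bar{\bm x}^{(0)}$ be an optimal solution of the subtour elimination problem $SEP(\bm c_0)$. Let \[ \bm c_1 \in \arg\min \Big\{ \sum_{\{i,j\}\in E} \bar x^{(0)}_{ij} c_{ij} \;:\; \sum_{\{i,j\}\in E} \bar z_{ij} c_{ij} \ge 1 \ \forall \bar{\bm z}\in\mathcal T_n,\ c_{ij}\le c_{ik}+c_{jk}\ \forall i,j,k\in V,\ c_{ij}\ge 0\ \forall \{i,j\}\in E \Big\}. \] Then \[ \frac{TOUR(\bm c_1)}{SUBT(\bm c_1)} \ge \frac{TOUR(\bm c_0)}{SUBT(\bm c_0)}. \]
   Context: $K_n=(V,E)$ is the complete undirected graph on $V=\{1,\dots,n\}$, with symmetric edge costs. A cost vector $\bm c$ is metric if $c_{ij}\ge 0$, $c_{ij}\le c_{ik}+c_{jk}$ for all $i,j,k$, (and $c_{ij}=0$ iff $i=j$). For $S\subset V$, $\delta(S)$ is the set of edges with exactly one endpoint in $S$, and $\mathcal S=\{S\subset V: 3\le|S|\le n-3\}$. The subtour elimination polytope is $P_{SEP}=\{\bm x\in\mathbb R^{|E|}_+ : \sum_{e\in\delta(\{v\})}x_e=2\ \forall v,\ \sum_{e\in\delta(S)}x_e\ge2\ \forall S\in\mathcal S,\ 0\le x_e\le1\ \forall e\}$; $SEP(\bm c)$ is the LP $\min\{\bm c^T\bm x:\bm x\in P_{SEP}\}$ and $SUBT(\bm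 c)$ its optimal value. $\mathcal T_n$ is the set of incidence vectors of tours (Hamiltonian cycles) of $K_n$, and $TOUR(\bm c)=\min_{\bm z\in\mathcal T_n}\bm c^T\bm z$ is the optimal TSP value. *)

(* Defs.v *)
From HB Require Import structures.
From mathcomp Require Import all_boot all_order all_algebra all_fingroup.
From mathcomp Require Import boolp classical_sets reals.
Set Implicit Arguments. Unset Strict Implicit. Unset Printing Implicit Defensive.
Import Order.TTheory GRing.Theory Num.Theory.
Local Open Scope ring_scope.


(* Vertices of K_n: 'I_n.  Edges {i,j}: ordered pairs (i,j) with i < j. *)
Definition edge (n : nat) := {e : 'I_n * 'I_n | (e.1 < e.2)%N}.

Section Defs.
Variables (R : realType) (n : nat).

(* the cost c_{ij} of the unordered pair {i,j} (0 on the diagonal) *)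
Definition pc (c : edge n -> R) (i j : 'I_n) : R :=
  match @insub _ (fun e : 'I_n * 'I_n => (e.1 < e.2)%N) (edge n) (i, j) with
  | Some e => c e
  | None =>
    match @insub _ (fun e : 'I_n * 'I_n => (e.1 < e.2)%N) (edge n) (j, i) with
    | Some e => c e
    | None => 0
    end
  end.

Definition dot (x c : edge n -> R) : R := \sum_(e : edge n) x e * c e.

Definition in_cut (S : {set 'I_n}) (e : edge n) : bool :=
  ((val e).1 \in S) != ((val e).2 \in S).

Definition cut_sum (x : edge n -> R) (S : {set 'I_n}) : R :=
  \sum_(e : edge n | in_cut S e) x e.

Definition triangle (c : edge n -> R) : Prop :=
  forall i j k : 'I_n, pc c i j <= pc c i k + pc c j k.

Definition nonneg (c : edge n -> R) : Prop := forall e, 0 <= c e.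

Definition metric (c : edge n -> R) : Prop :=
  nonneg c /\ triangle c /\ (forall i j : 'I_n, pc c i j = 0 <-> i = j).

Definition P_SEP (x : edge n -> R) : Prop :=
  (forall e, 0 <= x e <= 1) /\
  (forall v : 'I_n, cut_sum x [set v] = 2) /\
  (forall S : {set 'I_n}, (3 <= #|S| <= n - 3)%N -> 2 <= cut_sum x S).

Definition SUBT (c : edge n -> R) : R := inf [set dot c x | x in P_SEP]%classic.

(* incidence vector of the Hamiltonian cycle s 0, s 1, ..., s (n-1), s 0 *)
Definition tour_vec (s : {perm 'I_n}) (e : edge n) : R :=
  if [exists k : 'I_n,
        ((s k == (val e).1) && (s (ordS k) == (val e).2)) ||
        ((s k == (val e).2) && (s (ordS k) == (val e).1))]
  then 1 else 0.

Definition is_tour (z : edge n -> R) : Prop := exists s : {perm 'I_n}, z = tour_vec s.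

Definition TOUR (c : edge n -> R) : R := inf [set dot c z | z in is_tour]%classic.

Definition SEP_opt (c x : edge n -> R) : Prop :=
  P_SEP x /\ forall y, P_SEP y -> dot c x <= dot c y.

Definition c1_feasible (c : edge n -> R) : Prop :=
  (forall z, is_tour z -> 1 <= dot z c) /\ triangle c /\ nonneg c.

Definition c1_argmin (x c : edge n -> R) : Prop :=
  c1_feasible c /\ forall c', c1_feasible c' -> dot x c <= dot x c'.

End Defs.

(* Main.v *)
Require Import Defs.
From mathcomp Require Import all_boot all_order all_algebra all_fingroup.
From mathcomp Require Import boolp classical_sets reals.
From mathcomp Require Import lra zify.
Import Order.TTheory GRing.Theory Num.Theory.
Local Open Scope ring_scope.
Set Implicit Arguments. Unset Strict Implicit.

Section H.
Variables (R : realType) (n : nat).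
Implicit Types (c x : edge n -> R).

Lemma pc_edge c (e : edge n) : pc c (val e).1 (val e).2 = c e.
Proof.
rewrite /pc; case: insubP => [e' _ He'|]; last by rewrite -surjective_pairing (valP e).
by congr c; apply: val_inj; rewrite He' -surjective_pairing.
Qed.

Lemma pc_sym c i j : pc c i j = pc c j i.
Proof.
rewrite /pc; case: insubP => [e1 H1 _|N1]; case: insubP => [e2 H2 _|N2] //=.
by move: H1 H2 => /= H1 H2; have := ltn_trans H1 H2; rewrite ltnn.
Qed.

Lemma pc_diag c i : pc c i i = 0.
Proof. by rewrite /pc !insubN //= ltnn. Qed.

Lemma pc_ge0 c i j : nonneg c -> 0 <= pc c i j.
Proof. by move=> h; rewrite /pc; do 2 case: insubP => //. Qed.

Lemma edge_eq (e1 e2 : edge n) :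
  ((val e1).1 = (val e2).1 /\ (val e1).2 = (val e2).2) \/
  ((val e1).1 = (val e2).2 /\ (val e1).2 = (val e2).1) -> e1 = e2.
Proof.
case=> [[h1 h2]|[h1 h2]].
  by apply: val_inj; rewrite [val e1]surjective_pairing [val e2]surjective_pairing h1 h2.
have := valP e1; have := valP e2; rewrite /= h1 h2 => A B.
by have := ltn_trans A B; rewrite ltnn.
Qed.

Lemma cut_sumC x S : cut_sum x (~: S) = cut_sum x S.
Proof.
apply: eq_bigl => e; rewrite /in_cut !inE.
by case: (_ \in S); case: (_ \in S).
Qed.


Lemma cut_small x (T : {set 'I_n}) : P_SEP x -> (1 <= #|T| <= 2)%N -> 1 <= cut_sum x T.
Proof.
move=> [hx [hdeg _]] /andP[h1 h2].
have: (#|T| == 1)%N || (#|T| == 2)%N by lia.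
case/orP.
  by move=> /cards1P [a ->]; rewrite hdeg ler1n.
move=> /cards2P [a [b [ab ->]]].
have := hdeg a; rewrite /cut_sum (bigID (fun e => in_cut [set a; b] e)) /=.
set s1 := (X in X + _ = _); set s2 := (X in _ + X = _).
have le1 : s1 <= \sum_(e | in_cut [set a; b] e) x e.
  rewrite /s1 big_mkcond [X in _ <= X]big_mkcond; apply: ler_sum => e _.
  case: (in_cut [set a; b] e); case: (in_cut [set a] e) => //=.
  by case/andP: (hx e).
suff le2 : s2 <= 1 by lra.
rewrite /s2; case: (pickP (fun e => in_cut [set a] e && ~~ in_cut [set a; b] e)) => [e0 He0|N]; last first.
  by rewrite big_pred0.
have key : forall e, in_cut [set a] e && ~~ in_cut [set a; b] e ->
   (((val e).1 == a) && ((val e).2 == b)) || (((val e).1 == b) && ((val e).2 == a)).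
  move=> e; rewrite /in_cut !inE.
  have Np : ~~ (((val e).1 == a) && ((val e).1 == b)).
    by apply/negP => /andP[/eqP -> /eqP E]; move: ab; rewrite E eqxx.
  have Nq : ~~ (((val e).2 == a) && ((val e).2 == b)).
    by apply/negP => /andP[/eqP -> /eqP E]; move: ab; rewrite E eqxx.
  move: Np Nq.
  by case: ((val e).1 == a); case: ((val e).2 == a); case: ((val e).1 == b); case: ((val e).2 == b).
rewrite (eq_bigl (pred1 e0)) ?big_pred1_eq; first by case/andP: (hx e0).
move=> e /=; apply/idP/eqP => [He|->//].
apply: edge_eq.
move: (key e He) (key e0 He0).
case/orP => /andP[/eqP -> /eqP ->]; case/orP => /andP[/eqP -> /eqP ->]; by [left|right].
Qed.


Lemma cut_sep x (S : {set 'I_n}) u v : P_SEP x -> u \in S -> v \notin S -> 1 <= cut_sum x S.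
Proof.
move=> hP uS vS.
have c1 : (0 < #|S|)%N by apply/card_gt0P; exists u.
have c2 : (0 < #|~: S|)%N by apply/card_gt0P; exists v; rewrite inE.
have cS := cardsC S; rewrite card_ord in cS.
case: (leqP #|S| 2) => h1; first by apply: cut_small => //; rewrite c1.
case: (leqP (n - 2) #|S|) => h2.
  rewrite -cut_sumC; apply: cut_small => //; rewrite c2 /= -(leq_add2l #|S|) cS; lia.
case: hP => [_ [_ h]]; have := h S; rewrite h1 /=; have -> : (#|S| <= n - 3)%N by lia.
move=> H; have := H isT; lra.
Qed.

Lemma subt_pos c u v : triangle c -> nonneg c -> 0 < pc c u v ->
  exists2 d, 0 < d & forall x, P_SEP x -> d <= dot c x.
Proof.
move=> htri hnn hD.
set D := pc c u v.
have n0 : (0 < n)%N by have := ltn_ord u; lia.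
have nR : 0 < n%:R :> R by rewrite ltr0n.
set del := D / n%:R.
have delP : 0 < del by rewrite divr_gt0.
have Dn : D = n%:R * del by rewrite /del mulrC divfK // gt_eqF.
have dP : forall w, 0 <= pc c u w by move=> w; exact: pc_ge0.
have [j [hj Hj]] : exists j : nat, (j < n.-1)%N /\
    forall w, ~ (j%:R * del < pc c u w /\ pc c u w <= j.+1%:R * del).
  case: (pselect (exists j : nat, (j < n.-1)%N /\
    forall w, ~ (j%:R * del < pc c u w /\ pc c u w <= j.+1%:R * del))) => // NE.
  exfalso.
  have all : forall j : 'I_n.-1, exists w, j%:R * del < pc c u w /\ pc c u w <= j.+1%:R * del.
    move=> j; case: (pselect (exists w, j%:R * del < pc c u w /\ pc c u w <= j.+1%:R * del)) => // nw.
    exfalso; apply: NE; exists j; split; first exact: ltn_ord.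
    by move=> w hw; apply: nw; exists w.
  have [f Hf] := fin_all_exists all.
  have finj : injective f.
    move=> i k E; apply: val_inj => /=.
    have [A1 A2] := Hf i; have [B1 B2] := Hf k; rewrite E in A1 A2.
    case: (ltngtP i k) => // hik; exfalso.
      have : i.+1%:R * del <= k%:R * del by rewrite ler_wpM2r ?ler_nat // ltW.
      lra.
    have : k.+1%:R * del <= i%:R * del by rewrite ler_wpM2r ?ler_nat // ltW.
    lra.
  have sub : f @: (finset.setT : {set 'I_n.-1}) \subset ~: [set u; v].
    apply/fintype.subsetP => w /imsetP [j _ ->]; rewrite !inE negb_or.
    have [A1 A2] := Hf j.
    apply/andP; split; apply/eqP => E; rewrite E in A1 A2.
      rewrite pc_diag in A1.
      have : 0 <= j%:R * del by rewrite mulr_ge0 // ltW.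
      lra.
    have : j.+1%:R * del < n%:R * del.
      rewrite ltr_pM2r // ltr_nat; have := ltn_ord j; lia.
    rewrite -Dn -/D in A2 *; lra.
  have uv : u != v by apply/eqP => E; move: hD; rewrite /D E pc_diag ltxx.
  have := subset_leq_card sub.
  rewrite card_imset // cardsT card_ord.
  have := cardsC [set u; v]; rewrite cards2 uv card_ord.
  lia.
set S := [set w | pc c u w <= j%:R * del].
have jd0 : 0 <= j%:R * del by rewrite mulr_ge0 // ltW.
have uS : u \in S by rewrite inE pc_diag.
have vS : v \notin S.
  rewrite inE -/D Dn -ltNge ltr_pM2r // ltr_nat; lia.
have gen : forall a b, a \in S -> b \notin S -> del <= pc c a b.
  move=> a b; rewrite !inE -ltNge => ha hb.
  have hb2 : j.+1%:R * del < pc c u b.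
    rewrite ltNge; apply/negP => hb3; exact: (Hj b).
  have := htri u b a; rewrite (pc_sym c b a).
  have E : j.+1%:R * del = j%:R * del + del by rewrite -addn1 natrD mulrDl mul1r.
  lra.
have cr : forall e, in_cut S e -> del <= c e.
  move=> e; rewrite /in_cut -(pc_edge c e).
  case hA: ((val e).1 \in S); case hB: ((val e).2 \in S) => //= _.
    by apply: gen; rewrite ?hA ?hB.
  by rewrite pc_sym; apply: gen; rewrite ?hA ?hB.
exists del => // x hP.
have h1 := cut_sep hP uS vS.
have [hx _] := hP.
rewrite /dot (bigID (in_cut S)) /=.
have h2 : 0 <= \sum_(e | ~~ in_cut S e) c e * x e.
  by apply: sumr_ge0 => e _; rewrite mulr_ge0 //; case/andP: (hx e).
have h3 : del * cut_sum x S <= \sum_(e | in_cut S e) c e * x e.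
  rewrite /cut_sum mulr_sumr; apply: ler_sum => e he.
  by rewrite ler_wpM2r ?cr //; case/andP: (hx e).
have h4 : del <= del * cut_sum x S by rewrite -{1}(mulr1 del) ler_wpM2l // ltW.
lra.
Qed.
End H.

Lemma dotC (R : realType) n (x c : edge n -> R) : dot x c = dot c x.
Proof. by apply: eq_bigr => e _; rewrite mulrC. Qed.

Lemma tour_vec_ge0 (R : realType) n (s : {perm 'I_n}) e : 0 <= tour_vec R s e.
Proof. by rewrite /tour_vec; case: ifP. Qed.

Lemma tour_lb (R : realType) n (c z : edge n -> R) : nonneg c -> is_tour z -> TOUR c <= dot c z.
Proof.
move=> hc hz; apply: ge_inf; last by exists z.
exists 0 => y [z' [s ->] <-]; apply: sumr_ge0 => e _; rewrite mulr_ge0 //.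
exact: tour_vec_ge0.
Qed.

Unset Implicit Arguments.
Set Strict Implicit.

Theorem lemma3 (R : realType) (n : nat) (hn : (3 <= n)%N)
  (c0 x0 c1 : edge n -> R) :
  metric c0 -> TOUR c0 = 1 -> SEP_opt c0 x0 -> c1_argmin x0 c1 ->
  TOUR c0 / SUBT c0 <= TOUR c1 / SUBT c1.
Proof.
move=> [hnn0 [htri0 _]] hT0 [hx0 hopt] [[hf1 [htri1 hnn1]] hmin].
have feas0 : c1_feasible c0.
  split=> // z hz; rewrite dotC -hT0; exact: tour_lb.
have hle := hmin _ feas0.
have tour1 : is_tour (tour_vec R (1%g : {perm 'I_n})) by exists 1%g.
have S0E : SUBT c0 = dot c0 x0.
  apply/eqP; rewrite eq_le; apply/andP; split.
    apply: ge_inf; last by exists x0.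
    by exists (dot c0 x0) => y [x hx <-]; apply: hopt.
  apply: lb_le_inf; first by exists (dot c0 x0); exists x0.
  by move=> y [x hx <-]; apply: hopt.
have [e he] : exists e, 0 < c1 e.
  case: (pickP (fun e => 0 < c1 e)) => [e he|N]; first by exists e.
  exfalso; have := hf1 _ tour1; rewrite /dot big1 ?ler10 // => e _.
  have := N e; rewrite /= lt_neqAle hnn1 andbT => /negbFE/eqP <-.
  by rewrite mulr0.
have hpe : 0 < pc c1 (val e).1 (val e).2 by rewrite pc_edge.
have [d d0 hd] := subt_pos htri1 hnn1 hpe.
have S1lo : d <= SUBT c1.
  apply: lb_le_inf; first by exists (dot c1 x0); exists x0.
  by move=> y [x hx <-]; apply: hd.
have S1hi : SUBT c1 <= dot c1 x0.
  apply: ge_inf; last by exists x0.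
  by exists d => y [x hx <-]; apply: hd.
have T1lo : 1 <= TOUR c1.
  apply: lb_le_inf; first by exists (dot c1 (tour_vec R 1%g)); exists (tour_vec R 1%g).
  by move=> y [z hz <-]; rewrite -dotC; apply: hf1.
have S1pos : 0 < SUBT c1 by apply: lt_le_trans S1lo.
have S01 : SUBT c1 <= SUBT c0 by rewrite S0E -dotC; apply: le_trans hle; rewrite dotC.
have S0pos : 0 < SUBT c0 by apply: lt_le_trans S01.
rewrite hT0 !mul1r.
apply: (@le_trans _ _ (1 / SUBT c1)).
  by rewrite div1r lef_pV2 ?posrE.
by rewrite ler_wpM2r // invr_ge0 ltW.
Qed.
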